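(* Let $G=D\times L$ be a locally compact second countable group, with $D$ discrete, and identify $L$ with $\{1\}\times L$. Then the map $\mathcal{C}(G)\to\mathcal{C}(L)$, $H\mapsto H\cap L$, is continuous.
   Context: For a locally compact group $G$, $\mathcal{C}(G)$ is the set of closed subgroups of $G$ with the Chabauty topology, generated by the sets $\{H:H\cap K=\emptyset\}$ ($K\subset G$ compact) and $\{H:H\cap U\neq\emptyset\}$ ($U\subset G$ open). *)

(* Defs.v *)
From HB Require Import structures.
From mathcomp Require Import all_boot all_order all_algebra.
From mathcomp Require Import all_classical all_reals all_analysis.
Set Implicit Arguments. Unset Strict Implicit. Unset Printing Implicit Defensive.
Local Open Scope classical_set_scope.

Definition is_group {T : Type} (mul : T -> T -> T) (inv : T -> T) (e : T) : Prop :=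
  [/\ forall x y z, mul x (mul y z) = mul (mul x y) z,
      forall x, mul e x = x /\ mul x e = x &
      forall x, mul (inv x) x = e /\ mul x (inv x) = e].

Definition is_topological_group {T : topologicalType}
  (mul : T -> T -> T) (inv : T -> T) (e : T) : Prop :=
  [/\ is_group mul inv e,
      continuous (fun p : T * T => mul p.1 p.2) &
      continuous inv].

Definition closed_subgroup {T : topologicalType}
  (mul : T -> T -> T) (inv : T -> T) (e : T) (H : set T) : Prop :=
  [/\ closed H, H e,
      forall x y, H x -> H y -> H (mul x y) &
      forall x, H x -> H (inv x)].

Definition chabauty_basic {T : topologicalType}
  (n : nat) (K : nat -> set T) (m : nat) (U : nat -> set T) (H : set T) : Prop :=
  (forall i, (i < n)%N -> H `&` K i = set0) /\
  (forall j, (j < m)%N -> H `&` U j !=set0).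

(* Openness for the Chabauty topology on the space C(T) of closed subgroups,
   i.e. the topology generated by {H | H ∩ K = ∅} (K compact) and
   {H | H ∩ U ≠ ∅} (U open): a set S of closed subgroups (S is only looked at
   on closed subgroups) is open iff each of its points has a neighbourhood
   which is a finite intersection of subbasic sets, contained in S. *)
Definition chabauty_open {T : topologicalType}
  (mul : T -> T -> T) (inv : T -> T) (e : T) (S : set (set T)) : Prop :=
  forall H, closed_subgroup mul inv e H -> S H ->
  exists (n : nat) (K : nat -> set T) (m : nat) (U : nat -> set T),
    [/\ forall i, (i < n)%N -> compact (K i),
        forall j, (j < m)%N -> open (U j),
        chabauty_basic n K m U H &
        forall H', closed_subgroup mul inv e H' ->
          chabauty_basic n K m U H' -> S H'].

Definition prod_mul {D L : Type} (mD : D -> D -> D) (mL : L -> L -> L)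
  (x y : D * L) : D * L := (mD x.1 y.1, mL x.2 y.2).
Definition prod_inv {D L : Type} (iD : D -> D) (iL : L -> L) (x : D * L) : D * L :=
  (iD x.1, iL x.2).

(* H ∩ L, where L is identified with {1} × L. *)
Definition slice {D L : Type} (eD : D) (H : set (D * L)) : set L :=
  [set l | H (eD, l)].

(* Main.v *)
Require Import Defs.
From HB Require Import structures.
From mathcomp Require Import all_boot all_order all_algebra.
From mathcomp Require Import all_classical all_reals all_analysis.
Local Open Scope classical_set_scope.

Lemma pair_cont (D L : topologicalType) (d : D) :
  continuous (fun l : L => (d, l)).
Proof. move=> l; apply: cvg_pair; [exact: cvg_cst | exact: cvg_id]. Qed.

Lemma open_set1X (D : discreteTopologicalType) (L : topologicalType) (d : D)
  (U : set L) : open U -> open ([set d] `*` U).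
Proof.
move=> oU; rewrite openE => -[x l] [/= -> Ul].
exists ([set d], U) => //; split => /=; first exact: discrete_set1.
exact: open_nbhs_nbhs.
Qed.

Lemma slice_sub (D : discreteTopologicalType) (mD : D -> D -> D) (iD : D -> D) (eD : D)
  (L : topologicalType) (mL : L -> L -> L) (iL : L -> L) (eL : L) :
  is_group mD iD eD -> forall H : set (D * L),
  closed_subgroup (prod_mul mD mL) (prod_inv iD iL) (eD, eL) H ->
  closed_subgroup mL iL eL (slice eD H).
Proof.
move=> [_ hid hinv] H [cH He Hm Hi].
have ee : mD eD eD = eD by case: (hid eD).
have ie : iD eD = eD.
  by case: (hinv eD) => h _; case: (hid (iD eD)) => _ h2; rewrite -h2.
split => //.
- have -> : slice eD H = (fun l : L => (eD, l)) @^-1` H by [].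
  by apply: preimage_closed => // l _; exact: pair_cont.
- move=> x y hx hy; have := Hm _ _ hx hy; by rewrite /prod_mul /= ee.
- move=> x hx; have := Hi _ hx; by rewrite /prod_inv /= ie.
Qed.

Theorem lemma3
  (D : discreteTopologicalType) (mD : D -> D -> D) (iD : D -> D) (eD : D)
  (L : topologicalType) (mL : L -> L -> L) (iL : L -> L) (eL : L)
  (hD : is_topological_group mD iD eD)
  (hL : is_topological_group mL iL eL)
  (hlc : locally_compact [set: D * L])
  (hsc : @second_countable (D * L)%type)
  (hT2 : hausdorff_space (D * L)%type) :
  forall S : set (set L), chabauty_open mL iL eL S ->
    chabauty_open (prod_mul mD mL) (prod_inv iD iL) (eD, eL)
      (fun H : set (D * L) => S (slice eD H)).
Proof.
case: hD => gD _ _.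
move=> S hS H cH SH.
have [n [K [m [U [cK oU [bK bU] imp]]]]] := hS _ (@slice_sub D mD iD eD L mL iL eL gD H cH) SH.
have eqK : forall (H' : set (D * L)) i,
    (H' `&` ([set eD] `*` K i) = set0) <-> (slice eD H' `&` K i = set0).
  move=> H' i; split => h; apply/seteqP; split => //.
  - move=> x [hx kx]; have : (H' `&` ([set eD] `*` K i)) (eD, x) by split => //; split.
    by rewrite h.
  - move=> [d l] [hx [/= hd kx]]; have : (slice eD H' `&` K i) l.
      by split => //; rewrite /slice -hd.
    by rewrite h.
have eqU : forall (H' : set (D * L)) j,
    (H' `&` ([set eD] `*` U j) !=set0) <-> (slice eD H' `&` U j !=set0).
  move=> H' j; split.
  - by move=> [[d l] [hx [/= hd ux]]]; exists l; split => //; rewrite /slice /= -hd.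
  - by move=> [l [hx ux]]; exists (eD, l).
exists n, (fun i => [set eD] `*` K i), m, (fun j => [set eD] `*` U j); split.
- by move=> i hi; apply: compact_setX; [exact: compact_set1 | exact: cK].
- by move=> j hj; apply: open_set1X; exact: oU.
- by split => [i hi|j hj]; [apply/eqK; exact: bK | apply/eqU; exact: bU].
- move=> H' cH' [bK' bU']; apply: imp; first exact: (@slice_sub D mD iD eD L mL iL eL gD H' cH').
  by split => [i hi|j hj]; [apply/eqK; exact: bK' | apply/eqU; exact: bU'].
Qed.
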